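(* For real $\alpha,\beta$, the inequalities $M_{\alpha }\left( 1,\cosh x;\tfrac{2}{3}\right) <\frac{\sinh x}{x}<M_{\beta }\left( 1,\cosh x;\tfrac{2}{3}\right)$ hold for all $x\in(0,\infty)$ if and only if $\alpha \leq 0$ and $\beta \geq 4/5$.
   Context: For $a,b>0$ and $w\in(0,1)$, the weighted power mean is $M_{r}(a,b;w)=\left( wa^{r}+(1-w) b^{r}\right)^{1/r}$ if $r\neq 0$ and $M_{0}(a,b;w)=a^{w}b^{1-w}$. *)

(* Defs.v *)
From Stdlib Require Import Reals.
Open Scope R_scope.

Definition wpmean (r a b w : R) : R :=
  if Req_EM_T r 0 then Rpower a w * Rpower b (1 - w)
  else Rpower (w * Rpower a r + (1 - w) * Rpower b r) (1 / r).

(* Main.v *)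
Require Import Defs.
From Stdlib Require Import Reals Lra Psatz.
From Coquelicot Require Import Coquelicot.
Open Scope R_scope.

Lemma chsh x : cosh x * cosh x = sinh x * sinh x + 1.
Proof.
  unfold cosh, sinh. rewrite exp_Ropp.
  assert (H := exp_pos x). field. lra.
Qed.

Lemma cosh_pos x : 0 < cosh x.
Proof. unfold cosh. assert (H1 := exp_pos x). assert (H2 := exp_pos (-x)). lra. Qed.

Lemma cosh_ge1 x : 1 <= cosh x.
Proof. assert (H := chsh x). assert (H1 := cosh_pos x). nra. Qed.

Lemma sinh_pos x : 0 < x -> 0 < sinh x.
Proof. intros Hx. unfold sinh. assert (exp (-x) < exp x) by (apply exp_increasing; lra). lra. Qed.

Lemma sinh_nonneg x : 0 <= x -> 0 <= sinh x.
Proof. intros [Hx|Hx]. left; now apply sinh_pos. subst. unfold sinh. rewrite Ropp_0. lra. Qed.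

Lemma sinh_lt_cosh x : sinh x < cosh x.
Proof. unfold sinh, cosh. assert (H2 := exp_pos (-x)). lra. Qed.

Lemma cosh_gt1 x : 0 < x -> 1 < cosh x.
Proof. intros Hx. assert (H := chsh x). assert (H1 := cosh_pos x). assert (H2 := sinh_pos x Hx). nra. Qed.

Lemma sinh0 : sinh 0 = 0.
Proof. unfold sinh. rewrite Ropp_0. lra. Qed.
Lemma cosh0 : cosh 0 = 1.
Proof. unfold cosh. rewrite Ropp_0, exp_0. lra. Qed.

Lemma mono_lt (f g : R -> R) a b : a < b ->
  (forall x, a <= x <= b -> is_derive f x (g x)) ->
  (forall x, a < x < b -> 0 < g x) -> f a < f b.
Proof.
  intros Hab Hd Hg.
  destruct (MVT_cor2 f g a b Hab) as [c [Hc1 Hc2]].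
  { intros; apply is_derive_Reals; auto. }
  specialize (Hg c Hc2). nra.
Qed.

Lemma mono_le (f g : R -> R) a b : a <= b ->
  (forall x, a <= x <= b -> is_derive f x (g x)) ->
  (forall x, a < x < b -> 0 <= g x) -> f a <= f b.
Proof.
  intros [Hab|Hab] Hd Hg.
  - destruct (MVT_cor2 f g a b Hab) as [c [Hc1 Hc2]].
    { intros; apply is_derive_Reals; auto. }
    specialize (Hg c Hc2). nra.
  - subst; lra.
Qed.

Lemma pos0 (f g : R -> R) : f 0 = 0 ->
  (forall x, 0 <= x -> is_derive f x (g x)) ->
  (forall x, 0 < x -> 0 < g x) -> forall x, 0 < x -> 0 < f x.
Proof.
  intros H0 Hd Hg x Hx. rewrite <- H0. apply (mono_lt f g); auto.
  intros; apply Hd; lra. intros; apply Hg; lra.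
Qed.

Lemma nneg0 (f g : R -> R) b : f 0 = 0 ->
  (forall x, 0 <= x <= b -> is_derive f x (g x)) ->
  (forall x, 0 < x < b -> 0 <= g x) -> forall x, 0 <= x <= b -> 0 <= f x.
Proof.
  intros H0 Hd Hg x Hx. rewrite <- H0. apply (mono_le f g); try lra.
  intros; apply Hd; lra. intros; apply Hg; lra.
Qed.

Lemma sinh_gt_x x : 0 < x -> x < sinh x.
Proof.
  intros Hx. enough (0 < sinh x - x) by lra.
  apply (pos0 (fun x => sinh x - x) (fun x => cosh x - 1)); auto.
  - rewrite sinh0; ring.
  - intros y _. auto_derive; auto. ring.
  - intros y Hy. assert (H := cosh_gt1 y Hy). lra.
Qed.

Lemma sinh_ge_x x : 0 <= x -> x <= sinh x.
Proof. intros [H|H]. left; now apply sinh_gt_x. subst; rewrite sinh0; lra. Qed.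

Lemma F2 x : 0 < x -> 0 < x * cosh x - sinh x.
Proof.
  apply (pos0 (fun x => x * cosh x - sinh x) (fun x => x * sinh x)).
  - rewrite sinh0; ring.
  - intros y _. auto_derive; auto. ring.
  - intros y Hy. assert (H := sinh_pos y Hy). nra.
Qed.

Lemma F3 x : 0 < x -> 0 < cosh x * sinh x - x.
Proof.
  apply (pos0 (fun x => cosh x * sinh x - x) (fun x => 2 * sinh x * sinh x)).
  - rewrite sinh0; ring.
  - intros y _. auto_derive; auto. assert (H := chsh y). lra.
  - intros y Hy. assert (H := sinh_pos y Hy). nra.
Qed.

Lemma F4 x : 0 < x -> 0 < x * (2 * cosh x * cosh x + 1) - 3 * cosh x * sinh x.
Proof.
  apply (pos0 (fun x => x * (2 * cosh x * cosh x + 1) - 3 * cosh x * sinh x) (fun x => 4 * sinh x * (x * cosh x - sinh x))).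
  - rewrite sinh0; ring.
  - intros y _. auto_derive; auto. assert (H := chsh y). nra.
  - intros y Hy. assert (H := sinh_pos y Hy). assert (H2 := F2 y Hy). nra.
Qed.

Lemma F5 x : 0 <= x -> 1 + x*x/2 <= cosh x.
Proof.
  intros Hx. enough (0 <= cosh x - 1 - x*x/2) by lra.
  apply (nneg0 (fun x => cosh x - 1 - x*x/2) (fun x => sinh x - x) x); try lra.
  - rewrite cosh0; field.
  - intros y _. auto_derive; auto. field.
  - intros y Hy. assert (H := sinh_ge_x y). lra.
Qed.

Lemma F6 x : 0 <= x -> cosh x - 1 <= x * sinh x.
Proof.
  intros Hx. enough (0 <= x * sinh x - (cosh x - 1)) by lra.
  apply (nneg0 (fun x => x * sinh x - (cosh x - 1)) (fun x => x * cosh x) x); try lra.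
  - rewrite cosh0, sinh0; field.
  - intros y _. auto_derive; auto. field.
  - intros y Hy. assert (H := cosh_pos y). nra.
Qed.

Lemma half_c x : cosh x = 1 + 2 * sinh (x/2) * sinh (x/2).
Proof.
  unfold cosh, sinh. replace x with (x/2 + x/2) at 1 2 by field.
  rewrite Ropp_plus_distr, !exp_plus, !exp_Ropp.
  assert (H := exp_pos (x/2)). field. lra.
Qed.

Lemma half_s x : sinh x = 2 * sinh (x/2) * cosh (x/2).
Proof.
  unfold cosh, sinh. replace x with (x/2 + x/2) at 1 2 by field.
  rewrite Ropp_plus_distr, !exp_plus, !exp_Ropp.
  assert (H := exp_pos (x/2)). field. lra.
Qed.

Lemma F7aux z : 0 <= z -> 3 * z * cosh z <= sinh z * (sinh z * sinh z + 3).
Proof.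
  intros Hz. enough (0 <= sinh z * (sinh z * sinh z + 3) - 3 * z * cosh z) by lra.
  apply (nneg0 (fun z => sinh z * (sinh z * sinh z + 3) - 3 * z * cosh z)
    (fun z => 3 * sinh z * (sinh z * cosh z - z)) z); try lra.
  - rewrite sinh0; field.
  - intros y _. auto_derive; auto. field.
  - intros y Hy. assert (H := sinh_pos y ltac:(lra)). assert (H2 := F3 y ltac:(lra)). nra.
Qed.

Lemma F7 x : 0 <= x -> 3 * (x * sinh x) <= (cosh x - 1) * (cosh x + 5).
Proof.
  intros Hx. rewrite (half_c x), (half_s x).
  assert (H := F7aux (x/2) ltac:(lra)).
  assert (H1 := sinh_nonneg (x/2) ltac:(lra)).
  replace x with (2 * (x/2)) at 1 by field.
  set (z := x/2) in *. set (a := sinh z) in *. set (b := cosh z) in *.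
  nra.
Qed.

Lemma cosh_le2 x : 0 <= x <= 1 -> cosh x <= 2.
Proof.
  intros Hx. unfold cosh.
  assert (exp x <= exp 1) by (destruct (Req_dec x 1); [subst; lra| left; apply exp_increasing; lra]).
  assert (H3 := exp_le_3).
  assert (exp (-x) <= 1) by (rewrite <- exp_0; destruct (Req_dec x 0); [subst; rewrite Ropp_0; lra| left; apply exp_increasing; lra]).
  lra.
Qed.

Lemma B1 x : 0 <= x <= 1 -> sinh x <= 2 * x.
Proof.
  intros Hx. enough (0 <= 2*x - sinh x) by lra.
  apply (nneg0 (fun x => 2*x - sinh x) (fun x => 2 - cosh x) 1); try lra.
  - rewrite sinh0; field.
  - intros y _. auto_derive; auto. field.
  - intros y Hy. assert (H := cosh_le2 y ltac:(lra)). lra.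
Qed.

Lemma B2 x : 0 <= x <= 1 -> cosh x <= 1 + x * x.
Proof.
  intros Hx. enough (0 <= 1 + x*x - cosh x) by lra.
  apply (nneg0 (fun x => 1 + x*x - cosh x) (fun x => 2*x - sinh x) 1); try lra.
  - rewrite cosh0; field.
  - intros y _. auto_derive; auto. field.
  - intros y Hy. assert (H := B1 y ltac:(lra)). lra.
Qed.

Lemma B3 x : 0 <= x <= 1 -> sinh x <= x + x*x*x/3.
Proof.
  intros Hx. enough (0 <= x + x*x*x/3 - sinh x) by lra.
  apply (nneg0 (fun x => x + x*x*x/3 - sinh x) (fun x => 1 + x*x - cosh x) 1); try lra.
  - rewrite sinh0; field.
  - intros y _. auto_derive; auto. field.
  - intros y Hy. assert (H := B2 y ltac:(lra)). lra.
Qed.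

Lemma B4 x : 0 <= x <= 1 -> cosh x <= 1 + x*x/2 + x*x*x*x/12.
Proof.
  intros Hx. enough (0 <= 1 + x*x/2 + x*x*x*x/12 - cosh x) by lra.
  apply (nneg0 (fun x => 1 + x*x/2 + x*x*x*x/12 - cosh x) (fun x => x + x*x*x/3 - sinh x) 1); try lra.
  - rewrite cosh0; field.
  - intros y _. auto_derive; auto. field.
  - intros y Hy. assert (H := B3 y ltac:(lra)). lra.
Qed.

Lemma B5 x : 0 <= x <= 1 -> cosh x * sinh x - x <= 2*x*x*x/3 + 14*x*x*x*x*x/45.
Proof.
  intros Hx. enough (0 <= 2*x*x*x/3 + 14*x*x*x*x*x/45 - (cosh x * sinh x - x)) by lra.
  apply (nneg0 (fun x => 2*x*x*x/3 + 14*x*x*x*x*x/45 - (cosh x * sinh x - x))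
     (fun x => 2*x*x + 14*x*x*x*x/9 - 2 * sinh x * sinh x) 1); try lra.
  - rewrite sinh0; field.
  - intros y _. auto_derive; auto. assert (H := chsh y). nra.
  - intros y Hy. assert (H := B3 y ltac:(lra)). assert (H1 := sinh_nonneg y ltac:(lra)).
    assert (sinh y * sinh y <= (y + y*y*y/3) * (y + y*y*y/3)) by nra.
    assert (y*y*y*y*(y*y) <= y*y*y*y) by (assert (y*y <= 1) by nra; assert (0 <= y*y*y*y) by nra; nra).
    nra.
Qed.

Lemma F2b x : 0 <= x -> x*x*x/3 <= x * cosh x - sinh x.
Proof.
  intros Hx. enough (0 <= x * cosh x - sinh x - x*x*x/3) by lra.
  apply (nneg0 (fun x => x * cosh x - sinh x - x*x*x/3) (fun x => x * sinh x - x*x) x); try lra.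
  - rewrite sinh0; field.
  - intros y _. auto_derive; auto. field.
  - intros y Hy. assert (H := sinh_ge_x y ltac:(lra)). nra.
Qed.

Lemma F4b x : 0 <= x -> 4*x*x*x*x*x/15 <= x * (2 * cosh x * cosh x + 1) - 3 * cosh x * sinh x.
Proof.
  intros Hx. enough (0 <= x * (2 * cosh x * cosh x + 1) - 3 * cosh x * sinh x - 4*x*x*x*x*x/15) by lra.
  apply (nneg0 (fun x => x * (2 * cosh x * cosh x + 1) - 3 * cosh x * sinh x - 4*x*x*x*x*x/15)
     (fun x => 4 * sinh x * (x * cosh x - sinh x) - 4*x*x*x*x/3) x); try lra.
  - rewrite sinh0, cosh0; field.
  - intros y _. auto_derive; auto. assert (H := chsh y). nra.
  - intros y Hy. assert (H := sinh_ge_x y ltac:(lra)). assert (H2 := F2b y ltac:(lra)).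
    assert (0 <= y*y*y) by (apply Rmult_le_pos; nra). nra.
Qed.

Lemma PL1 t : 0 < t -> t <= 8 -> (1+t)*(5+17*t+2*t*t)^5 < (5+18*t+9*t*t)^5.
Proof.
  intros H0 H8.
  assert (E : (5+18*t+9*t*t)^5 - (1+t)*(5+17*t+2*t*t)^5 =
    t*t*(12500 + t*(182250 + t*(1072875 + t*(3251886 + t*(5378703 + t*(4815390
      + t*(2292345 + t*(565610 + t*(57657 - 32*t)))))))))) by ring.
  assert (0 < 12500 + t*(182250 + t*(1072875 + t*(3251886 + t*(5378703 + t*(4815390
      + t*(2292345 + t*(565610 + t*(57657 - 32*t))))))))).
  { apply Rplus_lt_le_0_compat; [lra|apply Rmult_le_pos; [lra|]].
    repeat (apply Rplus_le_le_0_compat; [lra|apply Rmult_le_pos; [lra|]]). lra. }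
  assert (0 < t*t) by nra. nra.
Qed.

Lemma PL2 y : 0 <= y -> (5+6*(3/2+y))^5 < 32768 * (1 + (3/2+y)*(3/2+y)/2)^4.
Proof.
  intros H0.
  assert (E : 32768 * (1 + (3/2+y)*(3/2+y)/2)^4 - (5+6*(3/2+y))^5 =
    130344 + y*(734112 + y*(1638592 + y*(1848384 + y*(1237152 + y*(526752
      + y*(145408 + y*(24576 + y*2048)))))))) by field.
  assert (0 <= y*(734112 + y*(1638592 + y*(1848384 + y*(1237152 + y*(526752
      + y*(145408 + y*(24576 + y*2048)))))))).
  { repeat (apply Rmult_le_pos; [lra|]; apply Rplus_le_le_0_compat; [lra|]). nra. }
  lra.
Qed.


Lemma exp2_le9 : exp 2 <= 9.
Proof.
  replace 2 with (1+1) by ring. rewrite exp_plus. assert (H := exp_le_3).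
  assert (H1 := exp_pos 1). nra.
Qed.

Lemma Lpos x : 0 < x -> cosh x * (5*cosh x + 6*(x*sinh x))^5 < (9*cosh x*cosh x - 4)^5.
Proof.
  intros Hx.
  assert (Hc1 := cosh_gt1 x Hx). assert (Hs := sinh_pos x Hx).
  assert (Hsc := sinh_lt_cosh x).
  destruct (Rle_dec x (3/2)) as [Hle|Hgt].
  - set (t := cosh x - 1).
    assert (Ht0 : 0 < t) by (unfold t; lra).
    assert (Ht8 : t <= 8).
    { unfold t. unfold cosh.
      assert (exp x <= exp 2) by (left; apply exp_increasing; lra).
      assert (exp (-x) <= exp 0) by (left; apply exp_increasing; lra).
      rewrite exp_0 in *. assert (H9 := exp2_le9). lra. }
    assert (Hy := F7 x ltac:(lra)).
    assert (Hy0 : 0 <= x * sinh x) by nra.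
    replace (cosh x) with (1 + t) by (unfold t; ring).
    replace (cosh x) with (1 + t) in Hy by (unfold t; ring).
    assert (5 * (1+t) + 6 * (x * sinh x) <= 5 + 17*t + 2*t*t) by nra.
    assert ((5 * (1+t) + 6 * (x * sinh x))^5 <= (5 + 17*t + 2*t*t)^5).
    { apply pow_incr. nra. }
    assert (H1 := PL1 t Ht0 Ht8).
    replace (9 * (1 + t) * (1 + t) - 4) with (5+18*t+9*t*t) by ring.
    assert (0 < 1 + t) by lra.
    eapply Rle_lt_trans; [|exact H1]. apply Rmult_le_compat_l; lra.
  - assert (H5 := F5 x ltac:(lra)).
    set (c := cosh x) in *.
    assert (Hc2 : 2 <= c) by nra.
    assert (5*c + 6*(x*sinh x) <= c * (5 + 6*x)) by nra.
    assert ((5*c + 6*(x*sinh x))^5 <= (c * (5 + 6*x))^5).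
    { apply pow_incr. nra. }
    assert (8*c*c <= 9*c*c - 4) by nra.
    assert ((8*c*c)^5 <= (9*c*c - 4)^5) by (apply pow_incr; nra).
    assert (HP2 := PL2 (x - 3/2) ltac:(lra)).
    replace (3/2 + (x - 3/2)) with x in HP2 by ring.
    assert ((1 + x*x/2)^4 <= c^4) by (apply pow_incr; nra).
    assert (0 < c^6) by (apply pow_lt; lra).
    assert (c * (c * (5 + 6*x))^5 < (8*c*c)^5).
    { replace (c * (c * (5 + 6*x))^5) with (c^6 * (5+6*x)^5) by ring.
      replace ((8*c*c)^5) with (c^6 * (32768 * c^4)) by ring.
      apply Rmult_lt_compat_l; auto. nra. }
    assert (c * (5*c + 6*(x*sinh x))^5 <= c * (c * (5 + 6*x))^5) by (apply Rmult_le_compat_l; lra).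
    lra.
Qed.

Lemma ln_le_m1 y : 0 < y -> ln y <= y - 1.
Proof. intros Hy. assert (H := exp_ineq1_le (ln y)). rewrite exp_ln in H; lra. Qed.

Lemma Rpower_pos' a b : 0 < Rpower a b.
Proof. unfold Rpower. apply exp_pos. Qed.

Lemma e1_props x : let e1 := Rpower (cosh x) (1/5) in
  1 <= e1 /\ e1 ^ 5 = cosh x.
Proof.
  intros e1. split.
  - unfold e1. assert (H : Rpower (cosh x) 0 <= Rpower (cosh x) (1/5)).
    { apply Rle_Rpower. apply cosh_ge1. lra. }
    rewrite Rpower_O in H by apply cosh_pos. exact H.
  - unfold e1. rewrite <- Rpower_pow by apply Rpower_pos'.
    rewrite Rpower_mult. replace (INR 5) with 5 by (simpl; ring). replace (1/5*5) with 1 by field.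
    apply Rpower_1, cosh_pos.
Qed.

Lemma p45 x : Rpower (cosh x) (4/5) = cosh x / Rpower (cosh x) (1/5).
Proof.
  assert (H := Rpower_pos' (cosh x) (1/5)).
  assert (E : Rpower (cosh x) (4/5) * Rpower (cosh x) (1/5) = cosh x).
  { rewrite <- Rpower_plus. replace (4/5+1/5) with 1 by field. apply Rpower_1, cosh_pos. }
  revert E H. generalize (Rpower (cosh x) (4/5)) (Rpower (cosh x) (1/5)).
  intros a b E H. rewrite <- E. field. lra.
Qed.

Definition Kf x := 5 * sinh x * cosh x / Rpower (cosh x) (1/5) + sinh x - 6 * cosh x * x.

Lemma Kpos x : 0 < x -> 0 < Kf x.
Proof.
  apply (pos0 Kf (fun x => (5 * cosh x * cosh x + 4 * sinh x * sinh x
           - Rpower (cosh x) (1/5) * (5 * cosh x + 6 * (x * sinh x))) / Rpower (cosh x) (1/5))).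
  - unfold Kf. rewrite sinh0. field. apply Rgt_not_eq, Rpower_pos'.
  - intros y _. unfold Kf, Rpower. assert (Hc := cosh_pos y). auto_derive.
    + repeat split; auto; apply Rgt_not_eq, exp_pos.
    + assert (He := exp_pos (1/5 * ln (cosh y))). field. lra.
  - intros y Hy. destruct (e1_props y) as [H1 H5].
    set (e1 := Rpower (cosh y) (1/5)) in *.
    assert (HL := Lpos y Hy). assert (Hch := chsh y).
    assert (Hc := cosh_pos y). assert (Hs := sinh_pos y Hy).
    apply Rdiv_lt_0_compat; [|lra].
    assert (e1 * (5 * cosh y + 6 * (y * sinh y)) < 9 * cosh y * cosh y - 4).
    { destruct (Rlt_le_dec (e1 * (5 * cosh y + 6 * (y * sinh y))) (9 * cosh y * cosh y - 4)); auto.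
      exfalso. assert (Hp : (9 * cosh y * cosh y - 4)^5 <= (e1 * (5 * cosh y + 6 * (y * sinh y)))^5).
      { apply pow_incr. split; auto. nra. }
      rewrite Rpow_mult_distr, H5 in Hp. lra. }
    nra.
Qed.

Definition Hf x := (cosh x * sinh x - x) - 2 * Rpower (cosh x) (1/5) * (cosh x * x - sinh x).

Lemma Hpos x : 0 < x -> 0 < Hf x.
Proof.
  apply (pos0 Hf (fun x => cosh x * cosh x + sinh x * sinh x - 1
      - 2 * (1/5 * (sinh x / cosh x) * Rpower (cosh x) (1/5) * (cosh x * x - sinh x)
             + Rpower (cosh x) (1/5) * (x * sinh x)))).
  - unfold Hf. rewrite sinh0. field.
  - intros y _. unfold Hf, Rpower. assert (Hc := cosh_pos y). auto_derive.
    + auto.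
    + field. lra.
  - intros y Hy. destruct (e1_props y) as [H1 H5].
    assert (HK := Kpos y Hy). unfold Kf in HK.
    set (e1 := Rpower (cosh y) (1/5)) in *.
    assert (Hch := chsh y).
    assert (Hc := cosh_pos y). assert (Hs := sinh_pos y Hy).
    assert (E : cosh y * cosh y + sinh y * sinh y - 1
      - 2 * (1/5 * (sinh y / cosh y) * e1 * (cosh y * y - sinh y) + e1 * (y * sinh y))
      = (2 * sinh y * e1 / (5 * cosh y)) * (5 * sinh y * cosh y / e1 + sinh y - 6 * cosh y * y)).
    { replace (cosh y * cosh y + sinh y * sinh y - 1) with (2 * sinh y * sinh y) by lra.
      field. lra. }
    rewrite E. apply Rmult_lt_0_compat; auto.
    apply Rdiv_lt_0_compat; nra.
Qed.

Definition mr r x := (1/r) * ln (2/3 + 1/3 * Rpower (cosh x) r).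
Definition m0 x := 1/3 * ln (cosh x).
Definition lsx x := ln (sinh x) - ln x.

Lemma Rpower1 y : Rpower 1 y = 1.
Proof. unfold Rpower. rewrite ln_1, Rmult_0_r. apply exp_0. Qed.

Lemma wp_nz r x : r <> 0 -> wpmean r 1 (cosh x) (2/3) = exp (mr r x).
Proof.
  intros Hr. unfold wpmean. destruct (Req_EM_T r 0); [contradiction|].
  rewrite Rpower1. unfold Rpower at 1. unfold mr. f_equal. f_equal. f_equal. lra.
Qed.

Lemma wp_0 x : wpmean 0 1 (cosh x) (2/3) = exp (m0 x).
Proof.
  unfold wpmean. destruct (Req_EM_T 0 0); [|contradiction].
  rewrite Rpower1. unfold Rpower, m0. rewrite Rmult_1_l. f_equal. f_equal. lra.
Qed.

Lemma ln_sx x : 0 < x -> ln (sinh x / x) = lsx x.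
Proof.
  intros Hx. unfold lsx, Rdiv. rewrite ln_mult, ln_Rinv; auto; try lra.
  apply sinh_pos; auto. apply Rinv_0_lt_compat; auto.
Qed.

Lemma lt_exp_iff a m : 0 < a -> (a < exp m <-> ln a < m).
Proof.
  intros Ha. split; intros H.
  - rewrite <- (ln_exp m). apply ln_increasing; auto.
  - rewrite <- (exp_ln a) by auto. apply exp_increasing; auto.
Qed.

Lemma gt_exp_iff a m : 0 < a -> (exp m < a <-> m < ln a).
Proof.
  intros Ha. split; intros H.
  - rewrite <- (ln_exp m). apply ln_increasing; auto. apply exp_pos.
  - rewrite <- (exp_ln a) by auto. apply exp_increasing; auto.
Qed.

Lemma sx_pos x : 0 < x -> 0 < sinh x / x.
Proof. intros Hx. apply Rdiv_lt_0_compat; auto. apply sinh_pos; auto. Qed.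

Lemma dF_nz r x : r <> 0 -> 0 < x ->
  is_derive (fun x => mr r x - lsx x) x
   ((Rpower (cosh x) r * (sinh x * sinh x * x) - cosh x * (2 + Rpower (cosh x) r) * (cosh x * x - sinh x))
     / (cosh x * (2 + Rpower (cosh x) r) * sinh x * x)).
Proof.
  intros Hr Hx. unfold mr, lsx, Rpower.
  assert (Hc := cosh_pos x). assert (Hs := sinh_pos x Hx).
  assert (He := exp_pos (r * ln (cosh x))).
  auto_derive.
  - repeat split; auto. lra.
  - field. repeat split; lra.
Qed.

Lemma dF_0 x : 0 < x ->
  is_derive (fun x => m0 x - lsx x) x
   ((sinh x * sinh x * x - 3 * cosh x * (cosh x * x - sinh x)) / (3 * cosh x * sinh x * x)).
Proof.
  intros Hx. unfold m0, lsx.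
  assert (Hc := cosh_pos x). assert (Hs := sinh_pos x Hx).
  auto_derive.
  - repeat split; auto.
  - field. repeat split; lra.
Qed.

Lemma deriv_opp F x l : is_derive F x l -> is_derive (fun y => - F y) x (- l).
Proof.
  intros H. apply is_derive_Reals in H. apply is_derive_Reals.
  apply (derivable_pt_lim_opp F x l H).
Qed.

Lemma neg_from_decr (F G : R -> R) b : 0 < b ->
  (forall x, 0 < x <= b -> is_derive F x (G x)) ->
  (forall x, 0 < x < b -> G x < 0) ->
  (forall y, 0 < y <= 1 -> F y <= 2*y) ->
  forall x, 0 < x <= b -> F x < 0.
Proof.
  intros Hb Hd HG Hup.
  assert (Hdec : forall u v, 0 < u < v -> v <= b -> F v < F u).
  { intros u v Huv Hvb.
    assert (- F u < - F v); [|lra].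
    apply (mono_lt (fun x => - F x) (fun x => - G x) u v); try lra.
    - intros y Hy. apply deriv_opp. apply Hd. lra.
    - intros y Hy. assert (G y < 0) by (apply HG; lra). lra. }
  intros x Hx.
  assert (H1 : F x < F (x/2)) by (apply Hdec; lra).
  destruct (Rle_dec (F (x/2)) 0) as [H2|H2]; [lra|].
  exfalso.
  set (y := Rmin (Rmin (x/4) (F (x/2) / 4)) 1).
  assert (Hy0 : 0 < y) by (unfold y; repeat apply Rmin_pos; lra).
  assert (Hy1 : y <= x/4) by (unfold y; eapply Rle_trans; [apply Rmin_l|apply Rmin_l]).
  assert (Hy2 : y <= F (x/2) / 4) by (unfold y; eapply Rle_trans; [apply Rmin_l|apply Rmin_r]).
  assert (Hy3 : y <= 1) by (unfold y; apply Rmin_r).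
  assert (F (x/2) < F y) by (apply Hdec; lra).
  assert (F y <= 2 * y) by (apply Hup; lra).
  lra.
Qed.

Lemma pos_from_incr (F G : R -> R) :
  (forall x, 0 < x -> is_derive F x (G x)) ->
  (forall x, 0 < x -> 0 < G x) ->
  (forall y, 0 < y <= 1 -> - (2*y) <= F y) ->
  forall x, 0 < x -> 0 < F x.
Proof.
  intros Hd HG Hlow x Hx.
  assert (- F x < 0); [|lra].
  apply (neg_from_decr (fun x => - F x) (fun x => - G x) x); try lra.
  - intros y Hy. apply deriv_opp. apply Hd. lra.
  - intros y Hy. assert (0 < G y) by (apply HG; lra). lra.
  - intros y Hy. assert (H := Hlow y Hy). lra.
Qed.

Lemma lsx_nonneg y : 0 < y -> 0 <= lsx y.
Proof.
  intros Hy. unfold lsx. assert (H := sinh_ge_x y ltac:(lra)).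
  assert (ln y <= ln (sinh y)) by (apply ln_le; lra). lra.
Qed.

Lemma lsx_le y : 0 < y -> lsx y <= ln (cosh y).
Proof.
  intros Hy. unfold lsx. assert (H := F2 y Hy). assert (Hs := sinh_pos y Hy).
  assert (ln (sinh y) <= ln (y * cosh y)) by (apply ln_le; lra).
  rewrite ln_mult in H0; auto. lra. apply cosh_pos.
Qed.

Lemma lnc_small y : 0 < y <= 1 -> ln (cosh y) <= 2*y.
Proof.
  intros Hy. assert (H1 := ln_le_m1 (cosh y) (cosh_pos y)).
  assert (H2 := F6 y ltac:(lra)). assert (H3 := B1 y ltac:(lra)).
  assert (H4 := sinh_nonneg y ltac:(lra)). nra.
Qed.

Lemma lnc_nonneg y : 0 <= ln (cosh y).
Proof. rewrite <- ln_1. apply ln_le; [lra|apply cosh_ge1]. Qed.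

Lemma ln_pow y r : ln (Rpower (cosh y) r) = r * ln (cosh y).
Proof. apply ln_Rpower. Qed.

Lemma bern r u : 0 < r < 1 -> 1 <= u -> Rpower u r <= 1 + r * (u - 1).
Proof.
  intros Hr Hu.
  enough (0 <= 1 + r * (u - 1) - Rpower u r) by lra.
  assert (E0 : 1 + r * (1 - 1) - Rpower 1 r = 0) by (rewrite Rpower1; ring).
  rewrite <- E0.
  apply (mono_le (fun u => 1 + r * (u - 1) - Rpower u r) (fun u => r - r * Rpower u r / u)); auto.
  - intros y Hy. unfold Rpower. auto_derive. lra. field. lra.
  - intros y Hy. assert (Rpower y r <= Rpower y 1) by (apply Rle_Rpower; lra).
    rewrite Rpower_1 in H by lra.
    assert (Rpower y r / y <= 1). { unfold Rdiv. apply (Rmult_le_reg_r y); [lra|]. rewrite Rmult_assoc, Rinv_l by lra. lra. } nra.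
Qed.

Lemma numid x v : v * (sinh x * sinh x * x) - cosh x * (2 + v) * (cosh x * x - sinh x)
  = v * (cosh x * sinh x - x) - 2 * cosh x * (cosh x * x - sinh x).
Proof. replace (sinh x * sinh x) with (cosh x * cosh x - 1) by (rewrite chsh; ring). ring. Qed.

Lemma suff_alpha r x : r <= 0 -> 0 < x -> wpmean r 1 (cosh x) (2/3) < sinh x / x.
Proof.
  intros Hr Hx. destruct (Req_dec r 0) as [H0|H0].
  - subst. rewrite wp_0. apply gt_exp_iff. apply sx_pos; auto. rewrite ln_sx by auto.
    enough (m0 x - lsx x < 0) by lra.
    apply (neg_from_decr (fun x => m0 x - lsx x)
      (fun x => (sinh x * sinh x * x - 3 * cosh x * (cosh x * x - sinh x)) / (3 * cosh x * sinh x * x)) x); try lra.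
    + intros y Hy. apply dF_0. lra.
    + intros y Hy. assert (Hc := cosh_pos y). assert (Hs := sinh_pos y ltac:(lra)).
      assert (HQ := F4 y ltac:(lra)). assert (Hch := chsh y).
      assert (0 < 3 * cosh y * sinh y * y) by (apply Rmult_lt_0_compat; [nra|lra]).
      apply Rdiv_neg_pos; auto. nra.
    + intros y Hy. unfold m0. assert (H1 := lsx_nonneg y ltac:(lra)).
      assert (H2 := lnc_small y Hy). assert (H3 := lnc_nonneg y). lra.
  - assert (Hr' : r < 0) by lra.
    rewrite wp_nz by auto. apply gt_exp_iff. apply sx_pos; auto. rewrite ln_sx by auto.
    enough (mr r x - lsx x < 0) by lra.
    apply (neg_from_decr (fun x => mr r x - lsx x)
      (fun x => (Rpower (cosh x) r * (sinh x * sinh x * x) - cosh x * (2 + Rpower (cosh x) r) * (cosh x * x - sinh x))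
     / (cosh x * (2 + Rpower (cosh x) r) * sinh x * x)) x); try lra.
    + intros y Hy. apply dF_nz; auto. lra.
    + intros y Hy. assert (Hc := cosh_pos y). assert (Hs := sinh_pos y ltac:(lra)).
      assert (HQ := F4 y ltac:(lra)). assert (H3 := F3 y ltac:(lra)).
      assert (Hv := Rpower_pos' (cosh y) r).
      assert (Hv1 : Rpower (cosh y) r <= Rpower (cosh y) 0) by (apply Rle_Rpower; [apply cosh_ge1|lra]).
      rewrite Rpower_O in Hv1 by auto.
      set (v := Rpower (cosh y) r) in *.
      assert (0 < cosh y * (2 + v) * sinh y * y) by (apply Rmult_lt_0_compat; [apply Rmult_lt_0_compat; [apply Rmult_lt_0_compat|]|]; lra).
      apply Rdiv_neg_pos; auto. rewrite numid. nra.
    + intros y Hy. assert (H1 := lsx_nonneg y ltac:(lra)).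
      assert (H2 := lnc_small y Hy).
      assert (mr r y <= ln (cosh y)); [|lra].
      unfold mr. assert (Hc := cosh_pos y).
      assert (Hv := Rpower_pos' (cosh y) r).
      assert (Hv1 : Rpower (cosh y) r <= Rpower (cosh y) 0) by (apply Rle_Rpower; [apply cosh_ge1|lra]).
      rewrite Rpower_O in Hv1 by auto.
      assert (ln (Rpower (cosh y) r) <= ln (2/3 + 1/3 * Rpower (cosh y) r)) by (apply ln_le; lra).
      rewrite ln_pow in H.
      assert (1/r < 0) by (unfold Rdiv; rewrite Rmult_1_l; apply Rinv_lt_0_compat; lra).
      replace (ln (cosh y)) with (1/r * (r * ln (cosh y))) by (field; lra).
      apply Rmult_le_compat_neg_l; lra.
Qed.

Lemma suff_beta r x : 4/5 <= r -> 0 < x -> sinh x / x < wpmean r 1 (cosh x) (2/3).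
Proof.
  intros Hr Hx.
  rewrite wp_nz by lra. apply lt_exp_iff. apply sx_pos; auto. rewrite ln_sx by auto.
  enough (0 < mr r x - lsx x) by lra.
  apply (pos_from_incr (fun x => mr r x - lsx x)
      (fun x => (Rpower (cosh x) r * (sinh x * sinh x * x) - cosh x * (2 + Rpower (cosh x) r) * (cosh x * x - sinh x))
     / (cosh x * (2 + Rpower (cosh x) r) * sinh x * x))); auto.
  - intros y Hy. apply dF_nz; auto. lra.
  - intros y Hy. assert (Hc := cosh_pos y). assert (Hs := sinh_pos y ltac:(lra)).
    assert (HH := Hpos y Hy). unfold Hf in HH. assert (H3 := F3 y ltac:(lra)).
    assert (Hv := Rpower_pos' (cosh y) r).
    assert (Hv1 : Rpower (cosh y) (4/5) <= Rpower (cosh y) r) by (apply Rle_Rpower; [apply cosh_ge1|lra]).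
    rewrite p45 in Hv1.
    destruct (e1_props y) as [He1 _].
    set (e1 := Rpower (cosh y) (1/5)) in *.
    set (v := Rpower (cosh y) r) in *.
    assert (0 < cosh y * (2 + v) * sinh y * y) by (apply Rmult_lt_0_compat; [apply Rmult_lt_0_compat; [apply Rmult_lt_0_compat|]|]; lra).
    apply Rdiv_lt_0_compat; auto. rewrite numid.
    assert (E : cosh y / e1 * (cosh y * sinh y - y) - 2 * cosh y * (cosh y * y - sinh y)
      = cosh y / e1 * ((cosh y * sinh y - y) - 2 * e1 * (cosh y * y - sinh y))) by (field; lra).
    assert (0 < cosh y / e1) by (apply Rdiv_lt_0_compat; lra).
    assert (0 < cosh y / e1 * ((cosh y * sinh y - y) - 2 * e1 * (cosh y * y - sinh y))) by (apply Rmult_lt_0_compat; lra).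
    nra.
  - intros y Hy. assert (H1 := lsx_le y ltac:(lra)).
    assert (H2 := lnc_small y Hy).
    assert (0 <= mr r y); [|lra].
    unfold mr. assert (Hc := cosh_pos y).
    assert (Hv1 : Rpower (cosh y) 0 <= Rpower (cosh y) r) by (apply Rle_Rpower; [apply cosh_ge1|lra]).
    rewrite Rpower_O in Hv1 by auto.
    assert (ln 1 <= ln (2/3 + 1/3 * Rpower (cosh y) r)) by (apply ln_le; lra).
    rewrite ln_1 in H.
    apply Rmult_le_pos; auto. unfold Rdiv. rewrite Rmult_1_l. left; apply Rinv_0_lt_compat; lra.
Qed.

Lemma nec_alpha r : 0 < r -> exists x, 0 < x /\ sinh x / x < wpmean r 1 (cosh x) (2/3).
Proof.
  intros Hr. set (x0 := exp (ln 3 / r)).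
  assert (Hx0 : 0 < x0) by apply exp_pos.
  exists x0. split; auto.
  rewrite wp_nz by lra. apply lt_exp_iff. apply sx_pos; auto. rewrite ln_sx by auto.
  unfold lsx, mr.
  assert (Hc := cosh_pos x0). assert (Hs := sinh_pos x0 Hx0).
  assert (Hsc := sinh_lt_cosh x0).
  assert (Hv := Rpower_pos' (cosh x0) r).
  assert (ln (1/3 * Rpower (cosh x0) r) < ln (2/3 + 1/3 * Rpower (cosh x0) r)) by (apply ln_increasing; lra).
  rewrite ln_mult, ln_pow in H by lra.
  assert (ln (sinh x0) < ln (cosh x0)) by (apply ln_increasing; lra).
  assert (Lx : ln x0 = ln 3 / r) by (unfold x0; apply ln_exp).
  assert (L3 : ln (1/3) = - ln 3) by (unfold Rdiv; rewrite Rmult_1_l; apply ln_Rinv; lra).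
  rewrite L3 in H.
  assert (1/r * (- ln 3 + r * ln (cosh x0)) < 1/r * ln (2/3 + 1/3 * Rpower (cosh x0) r)).
  { apply Rmult_lt_compat_l; auto. unfold Rdiv; rewrite Rmult_1_l; apply Rinv_0_lt_compat; lra. }
  replace (1/r * (- ln 3 + r * ln (cosh x0))) with (ln (cosh x0) - ln 3 / r) in H1 by (field; lra).
  lra.
Qed.

Lemma small_ineq r x : 0 < r -> 0 < x <= 4/5 - r ->
  r * ((cosh x - 1) * (cosh x * sinh x - x)) < x * (2 * cosh x * cosh x + 1) - 3 * cosh x * sinh x.
Proof.
  intros Hr Hx.
  assert (HQ := F4b x ltac:(lra)).
  assert (Hc := B4 x ltac:(lra)). assert (Hcs := B5 x ltac:(lra)).
  assert (Hc1 := cosh_ge1 x). assert (H3 := F3 x ltac:(lra)).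
  assert (Hp : (cosh x - 1) * (cosh x * sinh x - x) <= (x*x/2 + x*x*x*x/12) * (2*x*x*x/3 + 14*x*x*x*x*x/45)).
  { apply Rmult_le_compat; lra. }
  set (d := 4/5 - r) in *.
  replace r with (4/5 - d) by (unfold d; lra).
  assert (Hd1 : d < 4/5) by (unfold d; lra).
  assert (Hx1 : x < 1) by lra.
  set (x5 := x*x*x*x*x).
  assert (Hx5 : 0 < x5) by (unfold x5; repeat apply Rmult_lt_0_compat; lra).
  assert (E : (x*x/2 + x*x*x*x/12) * (2*x*x*x/3 + 14*x*x*x*x*x/45) = x5 * (1/3 + (19/90)*(x*x) + (7/270)*(x*x*x*x)))
    by (unfold x5; field).
  rewrite E in Hp.
  assert (HQ' : 4*x5/15 <= x * (2 * cosh x * cosh x + 1) - 3 * cosh x * sinh x) by (unfold x5; lra).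
  assert (Ha : (19/90)*(x*x) + (7/270)*(x*x*x*x) <= (1/4) * (x*x)).
  { assert (x*x <= 1) by nra. assert (0 <= x*x) by nra. nra. }
  assert (Hxd : x * x <= d * x) by nra.
  assert (x < 1) by (unfold d in *; lra).
  assert ((4/5 - d) * (x5 * (1/3 + (19/90)*(x*x) + (7/270)*(x*x*x*x))) < 4*x5/15).
  { pose (a := (19/90)*(x*x) + (7/270)*(x*x*x*x)).
    assert (Ha' : a <= 1/4 * (x*x)) by (unfold a; lra).
    assert (0 <= a) by (unfold a; nra).
    assert (d * x < d) by nra.
    assert (Hlt : (4/5 - d) * (1/3 + a) < 4/15) by nra.
    replace ((4/5 - d) * (x5 * (1/3 + (19/90)*(x*x) + (7/270)*(x*x*x*x)))) with (x5 * ((4/5 - d) * (1/3 + a))) by (unfold a; ring).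
    replace (4*x5/15) with (x5 * (4/15)) by field.
    apply Rmult_lt_compat_l; auto. }
  assert ((4/5 - d) * ((cosh x - 1) * (cosh x * sinh x - x)) <= (4/5 - d) * (x5 * (1/3 + (19/90)*(x*x) + (7/270)*(x*x*x*x)))).
  { apply Rmult_le_compat_l; unfold d in *; lra. }
  lra.
Qed.

Lemma nec_beta r : r < 4/5 -> exists x, 0 < x /\ wpmean r 1 (cosh x) (2/3) < sinh x / x.
Proof.
  intros Hr. destruct (Rle_dec r 0) as [H0|H0].
  - exists 1. split; [lra|]. apply suff_alpha; lra.
  - assert (Hr0 : 0 < r) by lra.
    set (d := 4/5 - r). exists d. split; [unfold d; lra|].
    assert (Hd : 0 < d) by (unfold d; lra).
    rewrite wp_nz by lra. apply gt_exp_iff. apply sx_pos; auto. rewrite ln_sx by auto.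
    enough (mr r d - lsx d < 0) by lra.
    apply (neg_from_decr (fun x => mr r x - lsx x)
      (fun x => (Rpower (cosh x) r * (sinh x * sinh x * x) - cosh x * (2 + Rpower (cosh x) r) * (cosh x * x - sinh x))
     / (cosh x * (2 + Rpower (cosh x) r) * sinh x * x)) d); try lra.
    + intros y Hy. apply dF_nz; lra.
    + intros y Hy. assert (Hc := cosh_pos y). assert (Hs := sinh_pos y ltac:(lra)).
      assert (HN := small_ineq r y Hr0 ltac:(unfold d in *; lra)).
      assert (H3 := F3 y ltac:(lra)).
      assert (Hv := Rpower_pos' (cosh y) r).
      assert (Hb := bern r (cosh y) ltac:(lra) (cosh_ge1 y)).
      set (v := Rpower (cosh y) r) in *.
      assert (0 < cosh y * (2 + v) * sinh y * y) by (apply Rmult_lt_0_compat; [apply Rmult_lt_0_compat; [apply Rmult_lt_0_compat|]|]; lra).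
      apply Rdiv_neg_pos; auto. rewrite numid. nra.
    + intros y Hy. assert (H1 := lsx_nonneg y ltac:(lra)).
      assert (H2 := lnc_small y Hy).
      assert (mr r y <= ln (cosh y)); [|lra].
      unfold mr. assert (Hc := cosh_pos y).
      assert (Hv := Rpower_pos' (cosh y) r).
      assert (Hv1 : Rpower (cosh y) 0 <= Rpower (cosh y) r) by (apply Rle_Rpower; [apply cosh_ge1|lra]).
      rewrite Rpower_O in Hv1 by auto.
      assert (ln (2/3 + 1/3 * Rpower (cosh y) r) <= ln (Rpower (cosh y) r)) by (apply ln_le; lra).
      rewrite ln_pow in H.
      assert (0 < 1/r) by (unfold Rdiv; rewrite Rmult_1_l; apply Rinv_0_lt_compat; lra).
      replace (ln (cosh y)) with (1/r * (r * ln (cosh y))) by (field; lra).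
      apply Rmult_le_compat_l; lra.
Qed.

Theorem corollary4p4 (alpha beta : R) :
  (forall x : R, 0 < x ->
     wpmean alpha 1 (cosh x) (2/3) < sinh x / x /\
     sinh x / x < wpmean beta 1 (cosh x) (2/3))
  <-> (alpha <= 0 /\ beta >= 4/5).
Proof.
  split.
  - intros H. split.
    + destruct (Rle_dec alpha 0) as [Ha|Ha]; auto. exfalso.
      destruct (nec_alpha alpha ltac:(lra)) as [x [Hx Hl]].
      destruct (H x Hx). lra.
    + destruct (Rge_dec beta (4/5)) as [Hb|Hb]; auto. exfalso.
      destruct (nec_beta beta ltac:(lra)) as [x [Hx Hl]].
      destruct (H x Hx). lra.
  - intros [Ha Hb] x Hx. split.
    + apply suff_alpha; auto.
    + apply suff_beta; auto; lra.
Qed.
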